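(* Let $I=\langle Q,D,\tau_{in},\tau_{out}\rangle$ be an instance of DTP, and let $C_I$ be the set consisting of all objects occurring in $\Pi_Q\cup D$ together with one fresh object $o_I$. Then DTP holds for $I$ if and only if for every tuple $\vec o$ over $C_I$ and every $\tau_{in}$-update $U$ involving only objects in $C_I$, $\vec o\in Q(D\cup U,\tau_{out})$ implies $\vec o\in Q(D,\tau_{out})$.
   Context: Temporal Datalog. Constants are partitioned into objects and integer time points; variables into object variables and time variables. A time term is a time point, a time variable, or an expression $t+k$ with $t$ a time variable and $k\in\mathbb{Z}$. Each predicate is either extensional (EDB) or intensional (IDB) and has an arity $n\ge0$, each position being of object sort or time sort; a predicate is rigid if all its positions are of object sort, and temporal if its last position is of time sort and all others are of object sort. An atom $P(t_1,\dots,t_n)$ has terms of the required sorts. A rule is $\bigwedge_i\alpha_i\to\alpha$ with $\alpha$ and all $\alpha_i$ rigid or temporal atoms, $\alpha$ IDB whenever the body is nonempty, and every head variable occurring in the body. A program is a finite set of rules. A fact is a ground rigid or temporal atom without $+$ (identified with the rule $\top\to\alpha$); a dataset is a finite set of EDB facts. Rules are read as universally quantified first-order sentences with $+$ interpreted as integer addition; $\Pi\models\alpha$ denotes entailment. A query is $Q=\langle P_Q,\Pi_Q\rangle$ with $\Pi_Q$ a program and $P_Q$ an IDB predicate of $\Pi_Q$; it is temporal if $P_Q$ is temporal. For a temporal query $Q$, dataset $D$ and time point $\tau$, $Q(D,\tau)$ is the set of tuples of objects $\vec o$ with $\Pi_Q\cup D\models P_Q(\vec o,\tau)$. A $\tau_{in}$-history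 is a dataset consisting of rigid facts and temporal facts with time argument $\le\tau_{in}$; a $\tau_{in}$-update is a dataset consisting of temporal facts with time argument $>\tau_{in}$. Definitive Time Point (DTP): an instance is $\langle Q,D,\tau_{in},\tau_{out}\rangle$ with $Q$ a temporal query, $D$ a $\tau_{in}$-history and $\tau_{out}\le\tau_{in}$; DTP holds for it iff $Q(D,\tau_{out})=Q(D\cup U,\tau_{out})$ for every $\tau_{in}$-update $U$. *)

(* Defs.v *)
From Stdlib Require Import ZArith List.
Import ListNotations.
Open Scope Z_scope.

(* Objects are represented by natural numbers (an infinite supply, so fresh
   objects exist); time points are integers. *)
Definition object := nat.
Definition timept := Z.

Inductive sort := SObj | STime.

(* A predicate: a name, a sort signature (one sort per position; the arity is
   its length), and whether it is intensional (IDB, true) or extensional. *)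
Record pred := mkPred { pname : nat; psig : list sort; pidb : bool }.

Definition rigid_pred (p : pred) : Prop := Forall (fun s => s = SObj) (psig p).
Definition temporal_pred (p : pred) : Prop :=
  exists l, psig p = l ++ [STime] /\ Forall (fun s => s = SObj) l.

Inductive term :=
| OConst (o : object)
| OVar (x : nat)
| TConst (t : timept)
| TVar (x : nat)
| TPlus (x : nat) (k : Z).

Definition term_sort (t : term) : sort :=
  match t with OConst _ | OVar _ => SObj | _ => STime end.

Record atom := mkAtom { apred : pred; aargs : list term }.

Definition well_sorted (a : atom) : Prop :=
  map term_sort (aargs a) = psig (apred a).

Definition rt_atom (a : atom) : Prop :=
  well_sorted a /\ (rigid_pred (apred a) \/ temporal_pred (apred a)).

Definition term_vars (t : term) : list (bool * nat) :=
  match t with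
  | OVar x => [(true, x)]
  | TVar x | TPlus x _ => [(false, x)]
  | _ => []
  end.
Definition atom_vars (a : atom) : list (bool * nat) :=
  flat_map term_vars (aargs a).

Record rule := mkRule { rbody : list atom; rhead : atom }.

Definition wf_rule (r : rule) : Prop :=
  rt_atom (rhead r) /\ Forall rt_atom (rbody r) /\
  (rbody r <> [] -> pidb (apred (rhead r)) = true) /\
  (forall v, In v (atom_vars (rhead r)) -> In v (flat_map atom_vars (rbody r))).

Definition program := list rule.
Definition wf_program (P : program) : Prop := Forall wf_rule P.

Definition ground_noplus (t : term) : Prop :=
  match t with OConst _ | TConst _ => True | _ => False end.
Definition is_fact (a : atom) : Prop :=
  rt_atom a /\ Forall ground_noplus (aargs a).

Definition dataset := list atom.
Definition is_dataset (D : dataset) : Prop :=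
  Forall (fun a => is_fact a /\ pidb (apred a) = false) D.

Definition fact_rule (a : atom) : rule := mkRule [] a.
Definition with_data (P : program) (D : dataset) : program := P ++ map fact_rule D.

(* First-order semantics: object sort interpreted by an arbitrary domain Dom
   (object constants interpreted arbitrarily), time sort by the integers with
   + as integer addition. *)
Inductive value (Dom : Type) := VObj (d : Dom) | VTime (z : Z).
Arguments VObj {Dom} d.
Arguments VTime {Dom} z.

Record interp (Dom : Type) := mkInterp {
  iconst : object -> Dom;
  irel : pred -> list (value Dom) -> Prop }.
Arguments iconst {Dom} i o.
Arguments irel {Dom} i p l.

Definition eval_term {Dom : Type} (I : interp Dom)
  (vo : nat -> Dom) (vt : nat -> Z) (t : term) : value Dom :=
  match t with
  | OConst o => VObj (iconst I o)
  | OVar x => VObj (vo x)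
  | TConst z => VTime z
  | TVar x => VTime (vt x)
  | TPlus x k => VTime (vt x + k)
  end.

Definition holds_atom {Dom : Type} (I : interp Dom)
  (vo : nat -> Dom) (vt : nat -> Z) (a : atom) : Prop :=
  irel I (apred a) (map (eval_term I vo vt) (aargs a)).

Definition sat_rule {Dom : Type} (I : interp Dom) (r : rule) : Prop :=
  forall vo vt, Forall (holds_atom I vo vt) (rbody r) -> holds_atom I vo vt (rhead r).

Definition model {Dom : Type} (I : interp Dom) (P : program) : Prop :=
  Forall (sat_rule I) P.

Definition entails (P : program) (a : atom) : Prop :=
  forall (Dom : Type) (I : interp Dom), model I P ->
    forall vo vt, holds_atom I vo vt a.

Record query := mkQuery { qpred : pred; qprog : program }.

Definition preds_of_program (P : program) : list pred :=
  flat_map (fun r => apred (rhead r) :: map apred (rbody r)) P.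

Definition temporal_query (Q : query) : Prop :=
  wf_program (qprog Q) /\ pidb (qpred Q) = true /\
  In (qpred Q) (preds_of_program (qprog Q)) /\ temporal_pred (qpred Q).

(* o \in Q(D, tau): o is a tuple of objects (of the right length) with
   Pi_Q \cup D |= P_Q(o, tau). *)
Definition answer (Q : query) (D : dataset) (tau : timept) (o : list object) : Prop :=
  S (length o) = length (psig (qpred Q)) /\
  entails (with_data (qprog Q) D) (mkAtom (qpred Q) (map OConst o ++ [TConst tau])).

Definition fact_time (a : atom) : option Z :=
  match rev (aargs a) with TConst z :: _ => Some z | _ => None end.

Definition history (tin : timept) (D : dataset) : Prop :=
  is_dataset D /\
  Forall (fun a => rigid_pred (apred a) \/
                   (temporal_pred (apred a) /\ exists z, fact_time a = Some z /\ z <= tin)) D.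

Definition update (tin : timept) (U : dataset) : Prop :=
  is_dataset U /\
  Forall (fun a => temporal_pred (apred a) /\
                   exists z, fact_time a = Some z /\ tin < z) U.

Definition DTP_instance (Q : query) (D : dataset) (tin tout : timept) : Prop :=
  temporal_query Q /\ history tin D /\ tout <= tin.

Definition DTP (Q : query) (D : dataset) (tin tout : timept) : Prop :=
  forall U, update tin U ->
    forall o, answer Q D tout o <-> answer Q (D ++ U) tout o.

Definition term_objs (t : term) : list object :=
  match t with OConst o => [o] | _ => [] end.
Definition atom_objs (a : atom) : list object := flat_map term_objs (aargs a).
Definition rule_objs (r : rule) : list object :=
  atom_objs (rhead r) ++ flat_map atom_objs (rbody r).
Definition program_objs (P : program) : list object := flat_map rule_objs P.
Definition dataset_objs (D : dataset) : list object := flat_map atom_objs D.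

(* Main.v *)
Require Import Defs.
From Stdlib Require Import ZArith List Lia Classical.
Import ListNotations.

Lemma model_app_inv {Dom} (I : interp Dom) P Q : model I (P ++ Q) -> model I P.
Proof. unfold model; rewrite Forall_app; tauto. Qed.

Lemma entails_mono P D U a : entails (with_data P D) a -> entails (with_data P (D ++ U)) a.
Proof.
  unfold entails, with_data; intros H Dom I HM vo vt. apply H.
  unfold model in *. rewrite map_app, app_assoc, Forall_app in HM. tauto.
Qed.

Definition rename_term (f : object -> object) (t : term) : term :=
  match t with OConst o => OConst (f o) | t => t end.
Definition rename_atom f (a : atom) : atom :=
  mkAtom (apred a) (map (rename_term f) (aargs a)).
Definition rinterp {Dom} (I : interp Dom) (f : object -> object) : interp Dom :=
  mkInterp Dom (fun o => iconst I (f o)) (irel I).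

Lemma eval_rename {Dom} (I : interp Dom) f vo vt t :
  eval_term (rinterp I f) vo vt t = eval_term I vo vt (rename_term f t).
Proof. destruct t; reflexivity. Qed.

Lemma holds_rename {Dom} (I : interp Dom) f vo vt a :
  holds_atom (rinterp I f) vo vt a <-> holds_atom I vo vt (rename_atom f a).
Proof.
  unfold holds_atom, rename_atom; simpl. rewrite map_map.
  rewrite (map_ext _ _ (eval_rename I f vo vt)). tauto.
Qed.

Lemma rename_atom_fix f a : (forall x, In x (atom_objs a) -> f x = x) -> rename_atom f a = a.
Proof.
  destruct a as [p args]; unfold rename_atom, atom_objs; simpl. intros H.
  f_equal. rewrite <- (map_id args) at 2. apply map_ext_in. intros t Ht.
  destruct t; simpl; auto. f_equal. apply H. apply in_flat_map. exists (OConst o); simpl; auto.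
Qed.

Lemma holds_fix {Dom} (I : interp Dom) f vo vt a :
  (forall x, In x (atom_objs a) -> f x = x) ->
  holds_atom (rinterp I f) vo vt a <-> holds_atom I vo vt a.
Proof. intros H. rewrite holds_rename, rename_atom_fix; tauto. Qed.

Lemma sat_rule_fix {Dom} (I : interp Dom) f r :
  (forall x, In x (rule_objs r) -> f x = x) -> sat_rule I r -> sat_rule (rinterp I f) r.
Proof.
  unfold sat_rule, rule_objs. intros Hf H vo vt Hb.
  apply holds_fix. { intros; apply Hf, in_or_app; auto. }
  apply H. rewrite Forall_forall in *. intros b Hb'.
  apply (holds_fix I f). 2: auto.
  intros x Hx. apply Hf, in_or_app; right. apply in_flat_map; eauto.
Qed.

Lemma transfer P D U a f :
  (forall x, In x (program_objs P ++ dataset_objs D) -> f x = x) ->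
  entails (with_data P (D ++ U)) a ->
  entails (with_data P (D ++ map (rename_atom f) U)) (rename_atom f a).
Proof.
  intros Hf H Dom I HM vo vt.
  apply (proj1 (holds_rename I f vo vt a)). apply H.
  unfold model, with_data in *. rewrite !map_app, !Forall_app in *.
  destruct HM as [HP [HD HU]]. split; [|split].
  - rewrite Forall_forall in *. intros r Hr. apply sat_rule_fix; auto.
    intros x Hx; apply Hf, in_or_app; left. apply in_flat_map; eauto.
  - rewrite Forall_forall in *. intros r Hr. apply sat_rule_fix; auto.
    apply in_map_iff in Hr. destruct Hr as [d [<- Hd]].
    unfold rule_objs; simpl. rewrite app_nil_r.
    intros x Hx; apply Hf, in_or_app; right. apply in_flat_map; eauto.
  - rewrite Forall_forall in *. intros r Hr.
    apply in_map_iff in Hr. destruct Hr as [d [<- Hd]].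
    assert (HH := HU (fact_rule (rename_atom f d))).
    refine (_ (HH _)). 2: { apply in_map, in_map, Hd. }
    unfold sat_rule; simpl. intros Hs vo' vt' _. apply (proj2 (holds_rename I f vo' vt' d)). apply Hs. constructor.
Qed.

Definition cm_interp (oI : object) : interp (option object) :=
  mkInterp (option object) (fun o => if Nat.eqb o oI then None else Some o)
    (fun _ l => ~ In (VObj None) l).

Lemma cm_head oI vo vt h :
  (forall t, In t (aargs h) -> forall o, t = OConst o -> o <> oI) ->
  (forall t, In t (aargs h) -> forall x, t = OVar x -> vo x <> None) ->
  holds_atom (cm_interp oI) vo vt h.
Proof.
  intros H1 H2. unfold holds_atom; simpl. intros Hin.
  apply in_map_iff in Hin. destruct Hin as [t [Ht Hin]].
  destruct t; simpl in Ht; try discriminate.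
  - destruct (Nat.eqb_spec o oI); try discriminate. eapply H1; eauto.
  - injection Ht; intros; eapply H2; eauto.
Qed.

Lemma cm_model oI P D : wf_program P -> is_dataset D ->
  ~ In oI (program_objs P ++ dataset_objs D) -> model (cm_interp oI) (with_data P D).
Proof.
  intros HP HD Hf. unfold model, with_data. apply Forall_app; split.
  - unfold wf_program in HP. rewrite Forall_forall in *. intros r Hr.
    destruct (HP r Hr) as [_ [_ [_ Hv]]].
    intros vo vt Hb. apply cm_head.
    + intros t Ht o -> ->. apply Hf, in_or_app; left. apply in_flat_map. exists r; split; auto.
      unfold rule_objs. apply in_or_app; left. apply in_flat_map. exists (OConst oI); simpl; auto.
    + intros t Ht x -> Hn.
      assert (Hx : In (true, x) (atom_vars (rhead r))).
      { unfold atom_vars. apply in_flat_map. exists (OVar x). simpl; auto. }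
      apply Hv in Hx. apply in_flat_map in Hx. destruct Hx as [b [Hbin Hxb]].
      rewrite Forall_forall in Hb. apply (Hb b Hbin).
      apply in_flat_map in Hxb. destruct Hxb as [t [Htb Hxt]].
      destruct t as [| y | | y | y k]; simpl in Hxt; try tauto; destruct Hxt as [Hxt|[]]; try discriminate.
      injection Hxt; intros ->. apply in_map_iff. exists (OVar x); simpl; rewrite Hn; auto.
  - unfold is_dataset in HD. rewrite Forall_forall in *. intros r Hr.
    apply in_map_iff in Hr. destruct Hr as [d [<- Hd]].
    destruct (HD d Hd) as [[_ Hg] _]. rewrite Forall_forall in Hg.
    intros vo vt _; simpl. apply cm_head.
    + intros t Ht o -> ->. apply Hf, in_or_app; right. apply in_flat_map. exists d; split; auto.
      apply in_flat_map. exists (OConst oI); simpl; auto.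
    + intros t Ht x ->. specialize (Hg _ Ht). simpl in Hg. tauto.
Qed.

Lemma cm_not_entails oI P D a : wf_program P -> is_dataset D ->
  ~ In oI (program_objs P ++ dataset_objs D) -> In (OConst oI) (aargs a) ->
  ~ entails (with_data P D) a.
Proof.
  intros HP HD Hf Ha He.
  specialize (He _ (cm_interp oI) (cm_model oI P D HP HD Hf) (fun _ => None) (fun _ => 0%Z)).
  apply He. apply in_map_iff. exists (OConst oI). simpl. rewrite Nat.eqb_refl. auto.
Qed.

Lemma fact_time_rename f a : fact_time (rename_atom f a) = fact_time a.
Proof.
  unfold fact_time, rename_atom; simpl. rewrite <- map_rev.
  destruct (rev (aargs a)) as [|t l]; simpl; auto. destruct t; reflexivity.
Qed.

Lemma update_rename tin f U : update tin U -> update tin (map (rename_atom f) U).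
Proof.
  intros [HD HU]. split.
  - unfold is_dataset in *. rewrite Forall_map. eapply Forall_impl; [|exact HD].
    intros a [[[Hws Hrt] Hg] Hp]. repeat split; simpl; auto.
    + unfold well_sorted in *; simpl. rewrite map_map. rewrite <- Hws.
      apply map_ext. destruct a0; reflexivity.
    + rewrite Forall_map. eapply Forall_impl; [|exact Hg]. destruct a0; simpl; auto.
  - rewrite Forall_map. eapply Forall_impl; [|exact HU]. intros a. simpl.
    rewrite fact_time_rename. auto.
Qed.

Lemma rename_objs f U x : In x (dataset_objs (map (rename_atom f) U)) -> exists y, x = f y.
Proof.
  unfold dataset_objs. rewrite flat_map_concat_map, map_map, <- flat_map_concat_map.
  intros H. apply in_flat_map in H. destruct H as [a [_ H]].
  unfold atom_objs, rename_atom in H; simpl in H. apply in_flat_map in H.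
  destruct H as [t [Ht Hx]]. apply in_map_iff in Ht. destruct Ht as [t' [<- _]].
  destruct t'; simpl in Hx; try tauto. destruct Hx as [<-|[]]; eauto.
Qed.

Theorem proposition1 (Q : query) (D : dataset) (tin tout : Z)
  (HI : DTP_instance Q D tin tout)
  (oI : object)
  (Hfresh : ~ In oI (program_objs (qprog Q) ++ dataset_objs D)) :
  let C := oI :: (program_objs (qprog Q) ++ dataset_objs D) in
  DTP Q D tin tout <->
  (forall (o : list object) (U : dataset),
     (forall x, In x o -> In x C) ->
     update tin U ->
     (forall x, In x (dataset_objs U) -> In x C) ->
     answer Q (D ++ U) tout o -> answer Q D tout o).
Proof.
  intros C. split.
  - intros H o U _ HU _. apply (H U HU o).
  - intros H U HU o. split.
    + intros [Hl He]. split; auto. apply entails_mono; auto.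
    + intros [Hl He].
      set (C' := program_objs (qprog Q) ++ dataset_objs D) in *.
      set (f := fun x => if in_dec Nat.eq_dec x C' then x else oI).
      assert (Hf : forall x, In x C' -> f x = x).
      { intros x Hx; unfold f; destruct (in_dec Nat.eq_dec x C'); tauto. }
      assert (HfC : forall x, In (f x) C).
      { intros x; unfold f, C; destruct (in_dec Nat.eq_dec x C'); simpl; auto. }
      assert (Ht := transfer _ _ _ _ f Hf He).
      unfold rename_atom in Ht; simpl in Ht. rewrite map_app, map_map in Ht. simpl in Ht.
      assert (HA : answer Q D tout (map f o)).
      { apply (H (map f o) (map (rename_atom f) U)).
        - intros x Hx. apply in_map_iff in Hx. destruct Hx as [y [<- _]]. auto.
        - apply update_rename; auto.
        - intros x Hx. destruct (rename_objs f U x Hx) as [y ->]. auto.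
        - split. rewrite length_map; auto.
          rewrite map_map. exact Ht. }
      destruct HI as [[HP [_ [_ _]]] [[HD _] _]].
      destruct (classic (forall x, In x o -> In x C')) as [Hall|Hn].
      * replace o with (map f o). exact HA.
        rewrite <- (map_id o) at 2. apply map_ext_in. intros; apply Hf, Hall; auto.
      * exfalso. apply not_all_ex_not in Hn. destruct Hn as [x Hx].
        apply imply_to_and in Hx. destruct Hx as [Hxo HxC].
        destruct HA as [_ HA]. revert HA. apply (cm_not_entails oI _ _ _ HP HD Hfresh).
        simpl. apply in_or_app; left. rewrite map_map. apply in_map_iff. exists x.
        split; auto. unfold f. destruct (in_dec Nat.eq_dec x C'); tauto.
Qed.
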